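(* Let $a,b,c,d,e,f$ be positive reals such that $\mathrm{Anth}(a,b)$, $\mathrm{Anth}(e,f)$, $\mathrm{Anth}(b,c)$, $\mathrm{Anth}(d,e)$, $\mathrm{Anth}(a,c)$, $\mathrm{Anth}(d,f)$ are all finite or eventually periodic, with $\mathrm{Anth}(a,b)=\mathrm{Anth}(e,f)$ and $\mathrm{Anth}(b,c)=\mathrm{Anth}(d,e)$. Then $\mathrm{Anth}(a,c)=\mathrm{Anth}(d,f)$.
   Context: For positive reals $a,b$, the anthyphairesis of $a$ to $b$ is the Euclidean subtraction algorithm: set $e_{-1}=a$, $e_0=b$, and for $i\ge 0$, as long as $e_i>0$, write $e_{i-1}=k_i e_i+e_{i+1}$ with $k_i$ a nonnegative integer and $0\le e_{i+1}<e_i$; the process stops if some remainder is $0$. $\mathrm{Anth}(a,b)=[k_0,k_1,\dots]$ is the sequence of quotients; it is finite if the process stops, and eventually periodic if it is infinite and there exist $N\ge0$, $p\ge1$ with $k_{i+p}=k_i$ for all $i\ge N$. *)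

(* Defs.v *)
From HB Require Import structures.
From mathcomp Require Import all_boot all_order all_algebra.
From mathcomp Require Import reals.
Set Implicit Arguments. Unset Strict Implicit. Unset Printing Implicit Defensive.
Import Order.TTheory GRing.Theory Num.Theory.
Local Open Scope ring_scope.

Section Anth.
Variable R : realType.

(* One step of the Euclidean subtraction algorithm on the pair
   (e_{i-1}, e_i): if e_i > 0, return (e_i, e_{i-1} - k_i e_i) with
   k_i = floor(e_{i-1}/e_i); once a remainder is 0 the state is frozen. *)
Definition anth_step (p : R * R) : R * R :=
  let: (x, y) := p in
  if 0 < y then (y, x - (Num.truncn (x / y))%:R * y) else (x, y).

(* anth_state a b i = (e_{i-1}, e_i) *)
Definition anth_state (a b : R) (i : nat) : R * R := iter i anth_step (a, b).

(* Anth a b i = Some k_i if the i-th quotient exists (i.e. e_i > 0),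
   and None if the process has stopped before step i. *)
Definition Anth (a b : R) (i : nat) : option nat :=
  let: (x, y) := anth_state a b i in
  if 0 < y then Some (Num.truncn (x / y)) else None.

Definition anth_finite (a b : R) : Prop := exists n, Anth a b n = None.

Definition anth_eventually_periodic (a b : R) : Prop :=
  (forall i, Anth a b i <> None) /\
  exists N p : nat, (1 <= p)%N /\ forall i, (N <= i)%N -> Anth a b (i + p) = Anth a b i.

Definition anth_fin_or_per (a b : R) : Prop :=
  anth_finite a b \/ anth_eventually_periodic a b.

End Anth.

(* Main.v *)
Require Import Defs.
From HB Require Import structures.
From mathcomp Require Import all_boot all_order all_algebra.
From mathcomp Require Import reals.
From mathcomp Require Import lra ring.
From Stdlib Require Import FunctionalExtensionality.
Import Order.TTheory GRing.Theory Num.Theory.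
Local Open Scope ring_scope.

Section Aux.
Variable R : realType.

Lemma divstep (x y : R) : 0 <= x -> 0 < y ->
  (Num.truncn (x / y))%:R * y <= x /\ x < ((Num.truncn (x / y))%:R + 1) * y.
Proof.
move=> hx hy.
have /andP[h1 h2] := truncn_itv (divr_ge0 hx (ltW hy)).
split; first by rewrite -ler_pdivlMr.
by rewrite natr1 -ltr_pdivrMr.
Qed.
Arguments divstep {x y}.

Lemma stS (a b : R) i : anth_state a b i.+1 = anth_step (anth_state a b i).
Proof. by []. Qed.

Lemma st_scale (t a b : R) i : 0 < t ->
  anth_state (t * a) (t * b) i =
  (t * (anth_state a b i).1, t * (anth_state a b i).2).
Proof.
move=> ht; elim: i => [|i IH] //.
rewrite !stS IH; case: (anth_state a b i) => x y /=.
rewrite /anth_step pmulr_rgt0 //; case: ifP => hy //=.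
have -> : t * x / (t * y) = x / y.
  by field; apply/andP; split; rewrite gt_eqF.
by congr pair; ring.
Qed.

Lemma Anth_scale (t a b : R) i : 0 < t -> Anth (t * a) (t * b) i = Anth a b i.
Proof.
move=> ht; rewrite /Anth st_scale //; case: (anth_state a b i) => x y /=.
rewrite pmulr_rgt0 //; case: ifP => hy //.
have -> : t * x / (t * y) = x / y.
  by field; apply/andP; split; rewrite gt_eqF.
by [].
Qed.

Lemma st_nonneg (a b : R) i : 0 <= a -> 0 <= b ->
  0 <= (anth_state a b i).1 /\ 0 <= (anth_state a b i).2.
Proof.
move=> ha hb; elim: i => [|i IH] //.
rewrite stS; case: (anth_state a b i) IH => x y /= [hx hy].
rewrite /anth_step; case: ifP => hy' //=.
have [h1 _] := divstep hx hy'.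
by split => //; rewrite subr_ge0.
Qed.
Arguments st_nonneg {a b}.

Lemma det_inv (a b e f : R) : 0 <= a -> 0 <= b -> 0 <= e -> 0 <= f ->
  Anth a b = Anth e f -> forall i,
  `|(anth_state a b i).1 * (anth_state e f i).2 -
    (anth_state a b i).2 * (anth_state e f i).1| = `|a * f - b * e|.
Proof.
move=> ha hb he hf hA; elim=> [|i IH] //.
rewrite !stS; move: IH.
have := congr1 (fun g => g i) hA; rewrite /Anth /=.
case: (anth_state a b i) => x y; case: (anth_state e f i) => u v /= HA IH.
move: HA; rewrite /anth_step; case: ifP => hy; case: ifP => hv //= [] <-.
rewrite -IH -normrN; congr `|_|; ring.
Qed.
Arguments det_inv {a b e f}.

Lemma halving (a b : R) i : 0 <= a -> 0 <= b ->
  0 < (anth_state a b i.+1).2 ->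
  (anth_state a b i.+2).2 * 2 < (anth_state a b i).2.
Proof.
move=> ha hb.
have [hx hy] := st_nonneg i ha hb.
rewrite !stS; move: hx hy; case: (anth_state a b i) => x y /= hx hy.
rewrite /anth_step; case: ifP => hy0 /=; last by rewrite hy0.
move=> hr; rewrite hr /=.
have [h1 h2] := divstep hx hy0.
set k := (Num.truncn (x / y))%:R in h1 h2 hr *.
set r := x - k * y in hr *.
have hry : r < y by rewrite /r; lra.
have [h3 h4] := divstep (ltW hy0) hr.
case E: (Num.truncn (y / r)) h3 h4 => [|n] h3 h4.
  move: h4; rewrite mul0r add0r mul1r => h4; lra.
have hn : 1 <= n.+1%:R :> R by rewrite ler1n.
set s := n.+1%:R in hn h3 h4 *.
nra.
Qed.
Arguments halving {a b}.

Lemma pow_bound (a b : R) m : 0 <= a -> 0 <= b ->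
  (forall i, 0 < (anth_state a b i).2) ->
  (anth_state a b (m.*2)).2 * 2 ^+ m <= b.
Proof.
move=> ha hb hpos; elim: m => [|m IH]; first by rewrite expr0 mulr1.
rewrite doubleS exprS.
have := halving m.*2 ha hb (hpos _).
have := st_nonneg m.*2 ha hb.
have : 0 < 2 ^+ m :> R by rewrite exprn_gt0.
set y := (anth_state a b m.*2).2; set z := (anth_state a b m.*2.+2).2 => hp [_ hy] h.
nra.
Qed.
Arguments pow_bound {a b}.

Lemma archi_zero (d C : R) : 0 <= d -> 0 <= C -> (forall m, d * 2 ^+ m <= C) -> d = 0.
Proof.
move=> hd hC hm; apply/eqP; rewrite eq_le hd andbT; rewrite leNgt; apply/negP => dpos.
have /andP[_ h] := truncn_itv (divr_ge0 hC (ltW dpos)).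
set n := Num.truncn (C / d) in h.
have h2 : (n.+1%:R : R) <= 2 ^+ n.+1.
  by rewrite -natrX ler_nat ltnW // ltn_expl.
have := hm n.+1.
have : C < d * n.+1%:R by rewrite mulrC -ltr_pdivrMr.
nra.
Qed.

Lemma Anth_ratio (a b e f : R) : 0 < a -> 0 < b -> 0 < e -> 0 < f ->
  anth_fin_or_per a b -> Anth a b = Anth e f -> a * f = b * e.
Proof.
move=> ha hb he hf hfp hA.
have hD := det_inv (ltW ha) (ltW hb) (ltW he) (ltW hf) hA.
apply/eqP; rewrite -subr_eq0 -normr_eq0; apply/eqP.
case: hfp => [[n hn] | [hall _]].
  rewrite -(hD n).
  have := congr1 (fun g => g n) hA; rewrite /= hn /Anth; move: hn; rewrite /Anth.
  have := st_nonneg n (ltW ha) (ltW hb); have := st_nonneg n (ltW he) (ltW hf).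
  case: (anth_state a b n) => x y; case: (anth_state e f n) => u v /= [_ hv] [_ hy].
  case: ifP => hy' // _; case: ifP => hv' // _.
  have -> : y = 0 by apply/eqP; rewrite eq_le hy andbT leNgt hy'.
  have -> : v = 0 by apply/eqP; rewrite eq_le hv andbT leNgt hv'.
  by rewrite mulr0 mul0r subr0 normr0.
have hpos1 : forall i, 0 < (anth_state a b i).2.
  move=> i; have := hall i; rewrite /Anth.
  by case: (anth_state a b i) => x y /=; case: ifP.
have hpos2 : forall i, 0 < (anth_state e f i).2.
  move=> i; have := hall i; rewrite hA /Anth.
  by case: (anth_state e f i) => x y /=; case: ifP.
apply: (@archi_zero _ (b * f)); rewrite ?normr_ge0 ?mulr_ge0 ?ltW // => m.
rewrite -(hD m.*2).
have B1 := pow_bound m (ltW ha) (ltW hb) hpos1.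
have B2 := pow_bound m (ltW he) (ltW hf) hpos2.
have hp : 1 <= 2 ^+ m :> R by apply: exprn_ege1; lra.
have := congr1 (fun g => g m.*2) hA; rewrite /Anth /=.
have := st_nonneg m.*2 (ltW ha) (ltW hb); have := st_nonneg m.*2 (ltW he) (ltW hf).
have := hpos1 m.*2; have := hpos2 m.*2.
move: B1 B2.
case: (anth_state a b m.*2) => x y; case: (anth_state e f m.*2) => u v /= B1 B2 hv hy
  [hu _] [hx _].
rewrite hy hv => -[] hk.
have [h1 h2] := divstep hx hy.
have [h3 h4] := divstep hu hv.
rewrite hk in h1 h2.
set k := (Num.truncn (u / v))%:R in h1 h2 h3 h4.
have hlt : `|x * v - y * u| <= y * v.
  rewrite ler_norml; apply/andP; split; nra.
set P := 2 ^+ m in hp B1 B2 *.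
have : y * v * (P * P) <= b * f.
  have -> : y * v * (P * P) = (y * P) * (v * P) by ring.
  apply: ler_pM => //; apply: mulr_ge0; lra.
move=> hyv; apply: le_trans hyv.
have hyv0 : 0 <= y * v by apply: mulr_ge0; lra.
apply: (le_trans (y := y * v * P)); first by apply: ler_wpM2r => //; lra.
rewrite mulrA ler_peMr //; apply: mulr_ge0 => //; lra.
Qed.

End Aux.

Theorem proposition10p2p8 (R : realType) (a b c d e f : R) :
  0 < a -> 0 < b -> 0 < c -> 0 < d -> 0 < e -> 0 < f ->
  anth_fin_or_per a b -> anth_fin_or_per e f ->
  anth_fin_or_per b c -> anth_fin_or_per d e ->
  anth_fin_or_per a c -> anth_fin_or_per d f ->
  Anth a b = Anth e f -> Anth b c = Anth d e ->
  Anth a c = Anth d f.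
Proof.
move=> ha hb hc hd he hf hab _ hbc _ _ _ h1 h2.
have E1 := @Anth_ratio R a b e f ha hb he hf hab h1.
have E2 := @Anth_ratio R b c d e hb hc hd he hbc h2.
have ht : 0 < d / a by rewrite divr_gt0.
have Ed : d = d / a * a by rewrite divfK // gt_eqF.
have Ef : f = d / a * c.
  apply: (mulfI (x := a * b * e)); first by rewrite !mulf_neq0 // gt_eqF.
  have -> : a * b * e * (d / a * c) = (b * e) * (c * d) * (a / a) by ring.
  rewrite divff ?gt_eqF // mulr1 -E1 -E2; ring.
apply: functional_extensionality => i; rewrite [in RHS]Ed [in RHS]Ef Anth_scale //.
Qed.
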